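(* Let $S$ be a connected compact surface (closed, or with boundary) with a simplicial triangulation $T$ (so any two vertices span at most one edge), and let $\mathbf{d}_1,\mathbf{d}_2$ be two Euclidean polyhedral metrics on $(S,T)$, i.e. $(S,T,\mathbf{d}_1)$ and $(S,T,\mathbf{d}_2)$ are Euclidean polyhedral surfaces. Let $L_1,L_2$ be their discrete Laplace matrices. Then $L_1=L_2$ if and only if there is a constant $c>0$ with $\mathbf{d}_2=c\,\mathbf{d}_1$ (i.e. every edge length is multiplied by the same factor $c$).
   Context: An Euclidean polyhedral surface is a triple $(S,T,\mathbf{d})$ where $S$ is a surface, $T$ a triangulation of $S$ with vertices $v_1,\dots,v_N$, edges $e_1,\dots,e_m$ and faces $F$, and $\mathbf{d}$ is a metric on $S$ whose restriction to each triangle is isometric to a Euclidean triangle; equivalently $\mathbf{d}$ is given by edge lengths $d_k=d(e_k)>0$ satisfying the strict triangle inequalities on every face. Cotangent edge weight: if $[v_i,v_j]$ is a boundary edge lying in the single triangle $[v_i,v_j,v_k]$ and $\alpha$ is the angle at $v_k$, then $w_{ij}=\tfrac12\cot\alpha$; if $[v_i,v_j]$ is an interior edge and $\alpha,\beta$ are the two angles opposite to it in the two adjacent triangles, then $w_{ij}=\tfrac12(\cot\alpha+\cot\beta)$; $w_{ij}=0$ if $v_i,v_j$ are not joined by an edge. The discrete Laplace matrix $L=(L_{ij})$ is the $N\times N$ matrix with $L_{ij}=-w_{ij}$ for $i\neq j$ and $L_{ii}=\sum_k w_{ik}$. *)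

(* Defs.v *)
From Stdlib Require Import Reals.
From mathcomp Require Import all_boot.
Set Implicit Arguments. Unset Strict Implicit. Unset Printing Implicit Defensive.

(* A face is a 3-element vertex set,
   an edge a 2-element vertex set; using sets encodes simpliciality (two
   vertices span at most one edge, three at most one face). *)
Definition Vert (N : nat) := 'I_N.

Definition is_edge (N : nat) (F : {set {set 'I_N}}) (e : {set 'I_N}) : bool :=
  (#|e| == 2) && [exists f in F, e \subset f].

(* Combinatorial triangulated connected compact surface (possibly with
   boundary): finitely many triangles, every vertex lies in a triangle, every
   edge lies in one (boundary) or two (interior) triangles, the link of every
   vertex is connected (a path or a cycle), and the 1-skeleton is connected. *)
Definition link_rel (N : nat) (F : {set {set 'I_N}}) (v : 'I_N) : rel 'I_N :=
  fun u w => [set u; w; v] \in F.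

Definition skel_rel (N : nat) (F : {set {set 'I_N}}) : rel 'I_N :=
  fun u w => is_edge F [set u; w].

Definition surface_triangulation (N : nat) (F : {set {set 'I_N}}) : Prop :=
  F != set0 /\
  [/\ (forall f, f \in F -> #|f| = 3),
      (forall v : 'I_N, exists f, f \in F /\ v \in f),
      (forall e, is_edge F e -> #|[set f in F | e \subset f]| \in [:: 1; 2]),
      (forall v u w : 'I_N, is_edge F [set u; v] -> is_edge F [set w; v] ->
          connect (link_rel F v) u w)
    & (forall u w : 'I_N, connect (skel_rel F) u w)].

Local Open Scope R_scope.

Definition polyhedral_metric (N : nat) (F : {set {set 'I_N}})
    (d : {set 'I_N} -> R) : Prop :=
  (forall e, is_edge F e -> 0 < d e) /\
  (forall i j k : 'I_N, [set i; j; k] \in F ->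
     d [set i; j] < d [set i; k] + d [set k; j]).

Definition cot (x : R) : R := cos x / sin x.

(* Angle opposite to the side of length c in a Euclidean triangle with side
   lengths a, b, c (law of cosines). *)
Definition opp_angle (a b c : R) : R :=
  acos ((a * a + b * b - c * c) / (2 * a * b)).

Definition cot_weight (N : nat) (F : {set {set 'I_N}}) (d : {set 'I_N} -> R)
    (i j : 'I_N) : R :=
  \big[Rplus/0]_(k < N | (i != j) && ([set i; j; k] \in F))
     (/ 2 * cot (opp_angle (d [set i; k]) (d [set j; k]) (d [set i; j]))).

Definition laplace (N : nat) (F : {set {set 'I_N}}) (d : {set 'I_N} -> R)
    (i j : 'I_N) : R :=
  if i == j then \big[Rplus/0]_(k < N) cot_weight F d i k
  else - cot_weight F d i j.

(* Main.v *)
Require Import Defs.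
From Stdlib Require Import Reals Lra Psatz.
Local Open Scope R_scope.
Definition Qf (P1 P2 P3 : R) : R := 2*(P1*P2+P2*P3+P3*P1) - P1*P1 - P2*P2 - P3*P3.
Definition Bf (P1 P2 P3 Q1 Q2 Q3 : R) : R :=
  (P2+P3-P1)*Q1 + (P1+P3-P2)*Q2 + (P1+P2-P3)*Q3.

Lemma id1 P1 P2 P3 Q1 Q2 Q3 :
  let sp := P1+P2+P3 in let sq := Q1+Q2+Q3 in
  2*sq*sp*Bf P1 P2 P3 Q1 Q2 Q3 = sp*sp*Qf Q1 Q2 Q3 + sq*sq*Qf P1 P2 P3 +
   2*((sp*Q1-sq*P1)*(sp*Q1-sq*P1) + (sp*Q2-sq*P2)*(sp*Q2-sq*P2) + (sp*Q3-sq*P3)*(sp*Q3-sq*P3)).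
Proof. intros sp sq; unfold sp, sq, Bf, Qf; ring. Qed.

Lemma id2 P1 P2 P3 Q1 Q2 Q3 :
  let sp := P1+P2+P3 in let sq := Q1+Q2+Q3 in let B := Bf P1 P2 P3 Q1 Q2 Q3 in
  sp*sp*(B*B - Qf P1 P2 P3 * Qf Q1 Q2 Q3) = (Qf P1 P2 P3 * sq - B*sp)*(Qf P1 P2 P3 * sq - B*sp) +
   2*Qf P1 P2 P3 *((sp*Q1-sq*P1)*(sp*Q1-sq*P1) + (sp*Q2-sq*P2)*(sp*Q2-sq*P2) + (sp*Q3-sq*P3)*(sp*Q3-sq*P3)).
Proof. intros sp sq B; unfold sp, sq, B, Bf, Qf; ring. Qed.

Lemma key P1 P2 P3 Q1 Q2 Q3 :
  0 < P1 -> 0 < P2 -> 0 < P3 -> 0 < Q1 -> 0 < Q2 -> 0 < Q3 ->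
  0 < Qf P1 P2 P3 -> 0 < Qf Q1 Q2 Q3 ->
  sqrt (Qf Q1 Q2 Q3) <= Bf P1 P2 P3 Q1 Q2 Q3 / sqrt (Qf P1 P2 P3) /\
  (sqrt (Qf Q1 Q2 Q3) = Bf P1 P2 P3 Q1 Q2 Q3 / sqrt (Qf P1 P2 P3) ->
   (P1+P2+P3)*Q1 = (Q1+Q2+Q3)*P1 /\ (P1+P2+P3)*Q2 = (Q1+Q2+Q3)*P2 /\
   (P1+P2+P3)*Q3 = (Q1+Q2+Q3)*P3).
Proof.
intros h1 h2 h3 k1 k2 k3 hp hq.
pose proof (id1 P1 P2 P3 Q1 Q2 Q3) as I1. pose proof (id2 P1 P2 P3 Q1 Q2 Q3) as I2.
simpl in I1, I2.
set (sp := P1+P2+P3) in *. set (sq := Q1+Q2+Q3) in *.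
set (B := Bf P1 P2 P3 Q1 Q2 Q3) in *.
set (Qp := Qf P1 P2 P3) in *. set (Qq := Qf Q1 Q2 Q3) in *.
set (r1 := sp*Q1-sq*P1) in *. set (r2 := sp*Q2-sq*P2) in *. set (r3 := sp*Q3-sq*P3) in *.
assert (Hsp : 0 < sp) by (unfold sp; lra). assert (Hsq : 0 < sq) by (unfold sq; lra).
assert (R0 : 0 <= r1*r1 + r2*r2 + r3*r3) by (pose proof (Rle_0_sqr r1); pose proof (Rle_0_sqr r2); pose proof (Rle_0_sqr r3); unfold Rsqr in *; lra).
assert (HB : 0 < B).
{ assert (0 < 2*sq*sp*B).
  { rewrite I1. assert (0 < sp*sp*Qq) by (apply Rmult_lt_0_compat; [apply Rmult_lt_0_compat|]; lra).
    assert (0 < sq*sq*Qp) by (apply Rmult_lt_0_compat; [apply Rmult_lt_0_compat|]; lra). lra. }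
  assert (0 < 2*sq*sp) by nra. nra. }
assert (HB2 : Qp * Qq <= B * B).
{ assert (0 <= sp*sp*(B*B - Qp*Qq)).
  { rewrite I2. assert (0 <= (Qp * sq - B*sp)*(Qp * sq - B*sp)) by exact (Rle_0_sqr (Qp*sq - B*sp)).
    assert (0 <= 2*Qp*(r1*r1 + r2*r2 + r3*r3)) by (apply Rmult_le_pos; lra). lra. }
  assert (0 < sp*sp) by nra. nra. }
assert (S1 : 0 < sqrt Qp) by (apply sqrt_lt_R0; lra).
assert (S2 : 0 < sqrt Qq) by (apply sqrt_lt_R0; lra).
assert (E1 : sqrt Qp * sqrt Qp = Qp) by (apply sqrt_sqrt; lra).
assert (E2 : sqrt Qq * sqrt Qq = Qq) by (apply sqrt_sqrt; lra).
assert (M : sqrt Qq * sqrt Qp <= B).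
{ set (x := sqrt Qq * sqrt Qp).
  assert (x*x <= B*B) by (unfold x; nra). assert (0 < x) by (unfold x; nra). nra. }
split.
- apply (Rmult_le_reg_r (sqrt Qp)); auto. unfold Rdiv. rewrite Rmult_assoc, Rinv_l; lra.
- intro Heq.
  assert (HBe : B = sqrt Qq * sqrt Qp).
  { rewrite Heq. field. lra. }
  assert (B*B = Qp*Qq) by (rewrite HBe; nra).
  assert (Z : (Qp * sq - B*sp)*(Qp * sq - B*sp) + 2*Qp*(r1*r1 + r2*r2 + r3*r3) = 0) by (rewrite <- I2; nra).
  assert (0 <= (Qp * sq - B*sp)*(Qp * sq - B*sp)) by exact (Rle_0_sqr (Qp*sq - B*sp)).
  assert (r1*r1 + r2*r2 + r3*r3 = 0) by nra.
  assert (r1 = 0) by nra. assert (r2 = 0) by nra. assert (r3 = 0) by nra.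
  unfold r1, r2, r3 in *. lra.
Qed.
From HB Require Import structures.
From mathcomp Require Import all_boot.
Set Implicit Arguments. Unset Strict Implicit. Unset Printing Implicit Defensive.
Lemma Qf_pos a b c : c < a + b -> a < b + c -> b < a + c -> 0 < Qf (a*a) (b*b) (c*c).
Proof.
intros H1 H2 H3.
replace (Qf (a*a) (b*b) (c*c)) with ((a+b+c)*((b+c-a)*((a+c-b)*(a+b-c)))) by (unfold Qf; ring).
repeat apply Rmult_lt_0_compat; lra.
Qed.

Lemma cot_opp a b c : c < a + b -> a < b + c -> b < a + c ->
  cot (opp_angle a b c) = (a*a+b*b-c*c) / sqrt (Qf (a*a) (b*b) (c*c)).
Proof.
intros H1 H2 H3.
assert (Ha : 0 < a) by lra. assert (Hb : 0 < b) by lra.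
assert (Hab : 0 < 2*a*b) by (apply Rmult_lt_0_compat; lra).
assert (HQ := Qf_pos H1 H2 H3).
set (Q := Qf (a*a) (b*b) (c*c)) in *.
set (t := (a*a+b*b-c*c)/(2*a*b)).
assert (E : 1 - t² = Q / ((2*a*b)*(2*a*b))).
{ unfold t, Q, Qf, Rsqr. field. lra. }
assert (Ht : -1 <= t <= 1).
{ assert (0 < Q / ((2*a*b)*(2*a*b))).
  { unfold Rdiv; apply Rmult_lt_0_compat; [lra| apply Rinv_0_lt_compat; apply Rmult_lt_0_compat; lra]. }
  unfold Rsqr in E. assert (t*t < 1) by lra. split; nra. }
assert (HS : 0 < sqrt Q) by (apply sqrt_lt_R0; lra).
assert (Es : sqrt (1 - t²) = sqrt Q / (2*a*b)).
{ apply sqrt_lem_1.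
  - rewrite E. apply Rlt_le; unfold Rdiv; apply Rmult_lt_0_compat; [lra| apply Rinv_0_lt_compat; apply Rmult_lt_0_compat; lra].
  - apply Rlt_le; unfold Rdiv; apply Rmult_lt_0_compat; [lra| apply Rinv_0_lt_compat; apply Rmult_lt_0_compat; lra].
  - rewrite E. unfold Rdiv. 
    replace (sqrt Q * / (2 * a * b) * (sqrt Q * / (2 * a * b))) with ((sqrt Q * sqrt Q) * / ((2*a*b)*(2*a*b))) by (field; lra).
    rewrite sqrt_sqrt; lra. }
unfold cot, opp_angle. fold t. rewrite cos_acos // sin_acos // Es.
unfold t. field. lra.
Qed.

Lemma face_real x y z X Y Z : x < z + y -> y < x + z -> z < x + y ->
  X < Z + Y -> Y < X + Z -> Z < X + Y ->
  let G1 := /2*cot(opp_angle z y x)*(X*X) + /2*cot(opp_angle x z y)*(Y*Y) + /2*cot(opp_angle y x z)*(Z*Z) in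
  let G2 := /2*cot(opp_angle Z Y X)*(X*X) + /2*cot(opp_angle X Z Y)*(Y*Y) + /2*cot(opp_angle Y X Z)*(Z*Z) in
  G2 <= G1 /\ (G2 = G1 -> (X*X)/(x*x) = (Y*Y)/(y*y) /\ (Y*Y)/(y*y) = (Z*Z)/(z*z)).
Proof.
move=> h1 h2 h3 k1 k2 k3 G1 G2.
have hx : 0 < x by lra. have hy : 0 < y by lra. have hz : 0 < z by lra.
have kx : 0 < X by lra. have ky : 0 < Y by lra. have kz : 0 < Z by lra.
have Hp : 0 < Qf (x*x) (y*y) (z*z) by apply Qf_pos; lra.
have Hq : 0 < Qf (X*X) (Y*Y) (Z*Z) by apply Qf_pos; lra.
have E1 : G1 = /2 * (Bf (x*x) (y*y) (z*z) (X*X) (Y*Y) (Z*Z) / sqrt (Qf (x*x) (y*y) (z*z))).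
{ rewrite /G1 !cot_opp; try lra.
  replace (Qf (z*z) (y*y) (x*x)) with (Qf (x*x) (y*y) (z*z)) by (unfold Qf; ring).
  replace (Qf (x*x) (z*z) (y*y)) with (Qf (x*x) (y*y) (z*z)) by (unfold Qf; ring).
  replace (Qf (y*y) (x*x) (z*z)) with (Qf (x*x) (y*y) (z*z)) by (unfold Qf; ring).
  have : 0 < sqrt (Qf (x*x) (y*y) (z*z)) by apply sqrt_lt_R0.
  move=> S. rewrite /Bf. field. lra. }
have E2 : G2 = /2 * sqrt (Qf (X*X) (Y*Y) (Z*Z)).
{ rewrite /G2 !cot_opp; try lra.
  replace (Qf (Z*Z) (Y*Y) (X*X)) with (Qf (X*X) (Y*Y) (Z*Z)) by (unfold Qf; ring).
  replace (Qf (X*X) (Z*Z) (Y*Y)) with (Qf (X*X) (Y*Y) (Z*Z)) by (unfold Qf; ring).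
  replace (Qf (Y*Y) (X*X) (Z*Z)) with (Qf (X*X) (Y*Y) (Z*Z)) by (unfold Qf; ring).
  have S : 0 < sqrt (Qf (X*X) (Y*Y) (Z*Z)) by apply sqrt_lt_R0.
  have SS := sqrt_sqrt (Qf (X*X) (Y*Y) (Z*Z)) (Rlt_le _ _ Hq).
  transitivity (/2 * (Qf (X*X) (Y*Y) (Z*Z) / sqrt (Qf (X*X) (Y*Y) (Z*Z)))).
  { move: S; set s := sqrt _ => S. rewrite /Qf. field. lra. }
  move: S SS; set s := sqrt _ => S SS. rewrite -{1}SS. field. lra. }
have sx : 0 < x*x by nra. have sy : 0 < y*y by nra. have sz : 0 < z*z by nra.
have tx : 0 < X*X by nra. have ty : 0 < Y*Y by nra. have tz : 0 < Z*Z by nra.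
have [K1 K2] := key _ _ _ _ _ _ sx sy sz tx ty tz Hp Hq.
rewrite E1 E2; split; first lra.
move=> Heq. have /K2 [L1 [L2 L3]] : sqrt (Qf (X*X) (Y*Y) (Z*Z)) = Bf (x*x) (y*y) (z*z) (X*X) (Y*Y) (Z*Z) / sqrt (Qf (x*x) (y*y) (z*z)) by lra.
move: L1 L2 L3. set sp := x*x+y*y+z*z. set sq := X*X+Y*Y+Z*Z.
have hsp : 0 < sp by rewrite /sp; lra.
move=> L1 L2 L3.
have A1 : X*X = sq/sp*(x*x) by apply (Rmult_eq_reg_l sp); [rewrite L1; field|]; lra.
have A2 : Y*Y = sq/sp*(y*y) by apply (Rmult_eq_reg_l sp); [rewrite L2; field|]; lra.
have A3 : Z*Z = sq/sp*(z*z) by apply (Rmult_eq_reg_l sp); [rewrite L3; field|]; lra.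
rewrite A1 A2 A3; split; field; lra.
Qed.
HB.instance Definition _ := Monoid.isComLaw.Build R 0 Rplus (fun a b c => esym (Rplus_assoc a b c)) Rplus_comm Rplus_0_l.

Lemma sum_le (I : finType) (f g : I -> R) :
  (forall x, f x <= g x) -> \big[Rplus/0]_(x : I) f x <= \big[Rplus/0]_(x : I) g x.
Proof. move=> H; apply: (big_ind2 (fun a b => a <= b)) => //; [lra| move=> *; lra]. Qed.

Lemma sum_eq_le (I : finType) (f g : I -> R) :
  (forall x, f x <= g x) -> \big[Rplus/0]_(x : I) f x = \big[Rplus/0]_(x : I) g x ->
  forall x, f x = g x.
Proof.
move=> H E x; move: E; rewrite (bigD1 x) //= (bigD1 x (P := predT)) //=.
have := sum_le (I:=I) (f := fun y => if y != x then f y else 0) (g := fun y => if y != x then g y else 0).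
rewrite -!big_mkcond /=. move=> /(_ _) HH.
have: \big[Rplus/0]_(i | i != x) f i <= \big[Rplus/0]_(i | i != x) g i.
  by apply: HH => y; case: (y != x) => //; lra.
have := H x. lra.
Qed.

Lemma rot3 n (f : 'I_n -> 'I_n -> 'I_n -> R) :
  \big[Rplus/0]_(i < n) \big[Rplus/0]_(j < n) \big[Rplus/0]_(k < n) f i j k =
  \big[Rplus/0]_(i < n) \big[Rplus/0]_(j < n) \big[Rplus/0]_(k < n) f k i j.
Proof.
rewrite exchange_big /=. apply: eq_bigr => i _. by rewrite exchange_big.
Qed.

Lemma set3_rot (T : finType) (i j k : T) : [set j; k; i] = [set i; j; k].
Proof. apply/setP => x; rewrite !inE. by case: (x == i); case: (x == j); case: (x == k). Qed.
Lemma set3_sw (T : finType) (i j k : T) : [set i; k; j] = [set i; j; k].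
Proof. apply/setP => x; rewrite !inE. by case: (x == i); case: (x == j); case: (x == k). Qed.

Lemma face_neq N (F : {set {set 'I_N}}) i j k : surface_triangulation F ->
  [set i; j; k] \in F -> i != j.
Proof.
move=> [_ [Hc _ _ _ _]] /Hc. case: eqP => // ->. by rewrite setUid cards2; case: (j != k).
Qed.

Lemma sum3_add n (f g : 'I_n -> 'I_n -> 'I_n -> R) :
  \big[Rplus/0]_(i < n) \big[Rplus/0]_(j < n) \big[Rplus/0]_(k < n) (f i j k + g i j k) =
  \big[Rplus/0]_(i < n) \big[Rplus/0]_(j < n) \big[Rplus/0]_(k < n) f i j k +
  \big[Rplus/0]_(i < n) \big[Rplus/0]_(j < n) \big[Rplus/0]_(k < n) g i j k.
Proof.
rewrite -big_split; apply: eq_bigr => i _; rewrite -big_split; apply: eq_bigr => j _.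
by rewrite -big_split.
Qed.

Definition cm N (d : {set 'I_N} -> R) (i j k : 'I_N) :=
  cot (opp_angle (d [set i; k]) (d [set j; k]) (d [set i; j])).
Definition Tt N (F : {set {set 'I_N}}) (d q : {set 'I_N} -> R) (i j k : 'I_N) :=
  if [set i; j; k] \in F then /2 * cm d i j k * q [set i; j] else 0.
Definition Gt N (F : {set {set 'I_N}}) (d q : {set 'I_N} -> R) (i j k : 'I_N) :=
  Tt F d q i j k + Tt F d q j k i + Tt F d q k i j.

Lemma w_T N (F : {set {set 'I_N}}) d q i j : surface_triangulation F ->
  cot_weight F d i j * q [set i; j] = \big[Rplus/0]_(k < N) Tt F d q i j k.
Proof.
move=> HS.
have M := @big_morph R R (fun x => x * q [set i; j]) 0 Rplus 0 Rplus
  (fun a b => Rmult_plus_distr_r a b _) (Rmult_0_l _).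
rewrite /cot_weight M big_mkcond; apply: eq_bigr => k _; rewrite /Tt /cm.
case Hf: ([set i; j; k] \in F); last by rewrite andbF.
by rewrite andbT (face_neq HS Hf).
Qed.

Lemma face_G N (F : {set {set 'I_N}}) d1 d2 i j k :
  polyhedral_metric F d1 -> polyhedral_metric F d2 -> [set i; j; k] \in F ->
  let q := fun e => d2 e * d2 e in
  let rho := fun e => d2 e * d2 e / (d1 e * d1 e) in
  Gt F d2 q i j k <= Gt F d1 q i j k /\
  (Gt F d2 q i j k = Gt F d1 q i j k ->
     rho [set i; j] = rho [set j; k] /\ rho [set j; k] = rho [set i; k]).
Proof.
move=> [_ T1] [_ T2] Hf q rho.
have f2 : [set j; k; i] \in F by rewrite set3_rot.
have f3 : [set k; i; j] \in F by rewrite -(set3_rot k i j).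
have f4 : [set i; k; j] \in F by rewrite set3_sw.
have a1 := T1 _ _ _ Hf. have a2 := T1 _ _ _ f2. have a3 := T1 _ _ _ f4.
have b1 := T2 _ _ _ Hf. have b2 := T2 _ _ _ f2. have b3 := T2 _ _ _ f4.
rewrite /Gt /Tt Hf f2 f3 /cm /q /rho.
rewrite (setUC [set j] [set i]) (setUC [set k] [set i]) (setUC [set k] [set j]) in a1 a2 a3 b1 b2 b3 *.
have := @face_real (d1 [set i;j]) (d1 [set j;k]) (d1 [set i;k]) (d2 [set i;j]) (d2 [set j;k]) (d2 [set i;k]).
move=> H. have := H a1 a2 a3 b1 b2 b3. by [].
Qed.

Lemma face_edge N (F : {set {set 'I_N}}) i j k : surface_triangulation F ->
  [set i; j; k] \in F -> is_edge F [set i; j].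
Proof.
move=> HS Hf; rewrite /is_edge cards2 (face_neq HS Hf) /=.
apply/existsP; exists [set i; j; k]; rewrite Hf /=.
by apply/subsetP => x; rewrite !inE => /orP[]->; rewrite ?orbT.
Qed.

Lemma opp_scale c a b z : 0 < c -> 0 < a -> 0 < b ->
  opp_angle (c*a) (c*b) (c*z) = opp_angle a b z.
Proof. move=> hc ha hb; rewrite /opp_angle; f_equal; field; lra. Qed.

Lemma rot3' n (f : 'I_n -> 'I_n -> 'I_n -> R) :
  \big[Rplus/0]_(i < n) \big[Rplus/0]_(j < n) \big[Rplus/0]_(k < n) f j k i =
  \big[Rplus/0]_(i < n) \big[Rplus/0]_(j < n) \big[Rplus/0]_(k < n) f i j k.
Proof. by rewrite (rot3 (fun i j k => f j k i)) rot3. Qed.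

Lemma sumG N (F : {set {set 'I_N}}) d q :
  \big[Rplus/0]_(i < N) \big[Rplus/0]_(j < N) \big[Rplus/0]_(k < N) Gt F d q i j k =
  3 * \big[Rplus/0]_(i < N) \big[Rplus/0]_(j < N) \big[Rplus/0]_(k < N) Tt F d q i j k.
Proof.
rewrite /Gt !sum3_add (rot3' (Tt F d q)) -(rot3 (Tt F d q)). ring.
Qed.

Theorem mainTheorem1 (N : nat) (F : {set {set 'I_N}})
    (d1 d2 : {set 'I_N} -> R) :
  surface_triangulation F ->
  polyhedral_metric F d1 -> polyhedral_metric F d2 ->
  (forall i j : 'I_N, laplace F d1 i j = laplace F d2 i j) <->
  (exists c : R, Rlt 0 c /\ forall e, is_edge F e -> d2 e = Rmult c (d1 e)).
Proof.
move=> HS H1 H2; split.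
- move=> HL.
  have W : forall i j, cot_weight F d1 i j = cot_weight F d2 i j.
  { move=> i j; case: (eqVneq i j) => [->|nij].
    - by rewrite /cot_weight !big_pred0 // => k; rewrite eqxx.
    - have := HL i j; rewrite /laplace (negbTE nij); lra. }
  set q := fun e => d2 e * d2 e.
  set rho := fun e => d2 e * d2 e / (d1 e * d1 e).
  have S : \big[Rplus/0]_(i < N) \big[Rplus/0]_(j < N) \big[Rplus/0]_(k < N) Gt F d2 q i j k =
           \big[Rplus/0]_(i < N) \big[Rplus/0]_(j < N) \big[Rplus/0]_(k < N) Gt F d1 q i j k.
  { rewrite !sumG; congr (_ * _); apply: eq_bigr => i _; apply: eq_bigr => j _.
    by rewrite -!w_T // W. }
  have LE : forall i j k, Gt F d2 q i j k <= Gt F d1 q i j k.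
  { move=> i j k. case Hf: ([set i; j; k] \in F).
    - by have [] := face_G H1 H2 Hf.
    - have f2 : [set j; k; i] \in F = false by rewrite set3_rot.
      have f3 : [set k; i; j] \in F = false by rewrite -(set3_rot k i j).
      rewrite /Gt /Tt Hf f2 f3; lra. }
  have EQ : forall i j k, Gt F d2 q i j k = Gt F d1 q i j k.
  { move=> i j k.
    have Ei := sum_eq_le (fun i => sum_le (fun j => sum_le (fun k => LE i j k))) S i.
    have Ej := sum_eq_le (fun j => sum_le (fun k => LE i j k)) Ei j.
    exact: (sum_eq_le (fun k => LE i j k) Ej k). }
  have FR : forall i j k, [set i; j; k] \in F ->
      rho [set i; j] = rho [set j; k] /\ rho [set j; k] = rho [set i; k].
  { move=> i j k Hf. have [_ ] := face_G H1 H2 Hf. by apply; apply: EQ. }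
  have LK : forall v u w, connect (link_rel F v) u w -> rho [set u; v] = rho [set w; v].
  { move=> v u w /connectP [p Hp ->]. elim: p u Hp => [|a p IH] u //= /andP [Hl Hp].
    rewrite -(IH a Hp). have [e1 e2] := FR _ _ _ Hl. exact: (esym e2). }
  have [_ [_ _ _ Hlink Hconn]] := HS.
  case: (pickP (fun e => is_edge F e)) => [e0 He0|none]; last first.
  { exists 1; split; first lra. by move=> e He; have := none e; rewrite He. }
  move: (He0) => /andP [/cards2P [a0 [b0 [nab E0]]] _].
  set r0 := rho e0.
  have Pb0 : forall y, is_edge F [set y; b0] -> rho [set y; b0] = r0.
  { move=> y Hy. rewrite /r0 E0. apply: LK. apply: Hlink => //. by rewrite -E0. }
  have Step : forall s t, is_edge F [set s; t] ->
      (forall y, is_edge F [set y; s] -> rho [set y; s] = r0) ->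
      forall y, is_edge F [set y; t] -> rho [set y; t] = r0.
  { move=> s t Hst Ps y Hy. rewrite (LK t y s (Hlink _ _ _ Hy Hst)).
    rewrite setUC. apply: Ps. by rewrite setUC. }
  have Gen : forall p s, (forall y, is_edge F [set y; s] -> rho [set y; s] = r0) ->
      path (skel_rel F) s p -> forall y, is_edge F [set y; last s p] -> rho [set y; last s p] = r0.
  { elim=> [|a p IH] s Ps //= /andP [Hsa Hp]. exact: IH (Step _ _ Hsa Ps) Hp. }
  have P : forall x y, is_edge F [set y; x] -> rho [set y; x] = r0.
  { move=> x. case/connectP: (Hconn b0 x) => p Hp ->. exact: Gen Pb0 Hp. }
  have r0pos : 0 < r0.
  { have p1 := H1.1 e0 He0. have p2 := H2.1 e0 He0.
    rewrite /r0 /rho /=. apply: Rdiv_lt_0_compat; apply: Rmult_lt_0_compat; lra. }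
  exists (sqrt r0); split; first by apply: sqrt_lt_R0.
  move=> e He. move: (He) => /andP [/cards2P [a [b [_ Ee]]] _].
  have Re : rho e = r0 by rewrite Ee; apply: P; rewrite -Ee.
  have p1 := H1.1 e He. have p2 := H2.1 e He.
  rewrite -Re /rho /=.
  have -> : sqrt (d2 e * d2 e / (d1 e * d1 e)) = d2 e / d1 e.
  { apply: sqrt_lem_1.
    - apply: Rlt_le; apply: Rdiv_lt_0_compat; apply: Rmult_lt_0_compat; lra.
    - apply: Rlt_le; apply: Rdiv_lt_0_compat; lra.
    - field; lra. }
  field; lra.
- move=> [c [hc Hd]].
  have CW : forall i j, cot_weight F d1 i j = cot_weight F d2 i j.
  { move=> i j; apply: eq_bigr => k /andP [_ Hf].
    have e1 := face_edge HS Hf.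
    have e2 : is_edge F [set i; k].
    { apply: (face_edge (k := j) HS). by rewrite set3_sw. }
    have e3 : is_edge F [set j; k].
    { apply: (face_edge (k := i) HS). by rewrite set3_rot. }
    rewrite !Hd // opp_scale //; by apply: H1.1. }
  move=> i j; rewrite /laplace; case: eqP => _.
  + by apply: eq_bigr => k _; apply: CW.
  + by rewrite CW.
Qed.
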